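(* Let $l\le d/2$, let $\ket{\psi_1},\dots,\ket{\psi_l}$ be unit vectors in $\mathbb{C}^d$ and $A_1,\dots,A_l\in[0,1]$ be such that $\mathbf{N}=(N_1,\dots,N_{l+1})$ with $N_i=A_i\ket{\psi_i}\bra{\psi_i}$ for $i\in[l]$ and $N_{l+1}=\mathbb{I}_d-\sum_{j=1}^lA_j\ket{\psi_j}\bra{\psi_j}$ is a POVM. Let $W=\mathrm{span}_{\mathbb{C}}\{\ket{\psi_i}:i\in[l]\}$, $W^\perp$ its orthogonal complement, and $|X|$ the dimension of a subspace $X$. Then $\Phi_t(\mathbf{N})\in\mathrm{SP}(d)$ for all $$0\le t\le t_{\mathbf{N}}:=\min_{i\in[l]}\frac{|W^\perp|A_i}{|W|(1-A_i)+|W^\perp|}.$$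
   Context: A POVM on $\mathbb{C}^d$ is a tuple of positive semidefinite operators summing to $\mathbb{I}_d$; projective if $M_iM_j=\delta_{ij}M_i$. A classical post-processing (numbers $q_{i|j}\ge0$, $\sum_iq_{i|j}=1$) maps effects $M_j$ to $\sum_jq_{i|j}M_j$. $\mathrm{SP}(d)$ is the set of finite effect-wise convex combinations of post-processed projective measurements on $\mathbb{C}^d$. $\Phi_t(X)=tX+(1-t)\frac{\mathrm{tr}X}{d}\mathbb{I}_d$, applied effect-wise to POVMs. *)

(* Defs.v *)
From HB Require Import structures.
From mathcomp Require Import all_boot all_order all_algebra.
From mathcomp Require Import reals complex.
Set Implicit Arguments. Unset Strict Implicit. Unset Printing Implicit Defensive.
Import Order.TTheory GRing.Theory Num.Theory.
Local Open Scope ring_scope.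
Local Open Scope complex_scope.

Definition adj (R : realType) (m n : nat) (A : 'M[R[i]]_(m, n)) : 'M[R[i]]_(n, m) :=
  (map_mx Num.conj A)^T.

Definition psd (R : realType) (d : nat) (A : 'M[R[i]]_d) : Prop :=
  A = adj A /\ forall v : 'cV[R[i]]_d, 0 <= (adj v *m A *m v) 0 0.

Definition is_povm (R : realType) (d n : nat) (M : 'I_n -> 'M[R[i]]_d) : Prop :=
  (forall k, psd (M k)) /\ \sum_(k < n) M k = 1%:M.

Definition is_projective (R : realType) (d n : nat) (M : 'I_n -> 'M[R[i]]_d) : Prop :=
  is_povm M /\ forall j k, M j *m M k = (if j == k then M j else 0).

(* classical post-processing q_{i|j}, i : 'I_m new outcome, j : 'I_n old outcome *)
Definition is_postproc (R : realType) (m n : nat) (q : 'I_m -> 'I_n -> R) : Prop :=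
  (forall i j, 0 <= q i j) /\ forall j, \sum_(i < m) q i j = 1.

Definition postproc (R : realType) (d m n : nat) (q : 'I_m -> 'I_n -> R)
  (M : 'I_n -> 'M[R[i]]_d) : 'I_m -> 'M[R[i]]_d :=
  fun i => \sum_(j < n) (q i j)%:C *: M j.

Definition SP (R : realType) (d m : nat) (N : 'I_m -> 'M[R[i]]_d) : Prop :=
  exists (k : nat) (p : 'I_k -> R) (n : 'I_k -> nat)
         (P : forall r : 'I_k, 'I_(n r) -> 'M[R[i]]_d)
         (q : forall r : 'I_k, 'I_m -> 'I_(n r) -> R),
    [/\ (forall r, 0 <= p r), \sum_(r < k) p r = 1,
        (forall r, is_projective (P r)), (forall r, is_postproc (q r)) &
        forall i, N i = \sum_(r < k) (p r)%:C *: postproc (q r) (P r) i].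

Definition Phi (R : realType) (d : nat) (t : R) (X : 'M[R[i]]_d) : 'M[R[i]]_d :=
  t%:C *: X + ((1 - t)%:C * \tr X / d%:R) *: 1%:M.

Definition PhiM (R : realType) (d m : nat) (t : R) (N : 'I_m -> 'M[R[i]]_d)
  : 'I_m -> 'M[R[i]]_d := fun i => Phi t (N i).

Definition Nmeas (R : realType) (d l : nat) (psi : 'I_l -> 'cV[R[i]]_d) (A : 'I_l -> R)
  : 'I_l.+1 -> 'M[R[i]]_d :=
  fun k => if unlift ord_max k is Some j then (A j)%:C *: (psi j *m adj (psi j))
           else 1%:M - \sum_(j < l) (A j)%:C *: (psi j *m adj (psi j)).

(* matrix whose rows are the psi_i (transposed); its rank is dim W *)
Definition Wmat (R : realType) (d l : nat) (psi : 'I_l -> 'cV[R[i]]_d) : 'M[R[i]]_(l, d) :=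
  \matrix_(k < l, j < d) psi k j 0.

(* Main.v *)
Require Import Defs.
From HB Require Import structures.
From mathcomp Require Import all_boot all_order all_algebra.
From mathcomp Require Import reals complex.
From mathcomp Require Import ring lra zify.
From Stdlib Require Import Lia.
Import Order.TTheory GRing.Theory Num.Theory.
Local Open Scope ring_scope.
Local Open Scope complex_scope.
Section Basics.
Variable R : realType.
Local Notation C := R[i].

Lemma adjE m n (M : 'M[C]_(m, n)) i j : adj M i j = Num.conj (M j i).
Proof. by rewrite /adj !mxE. Qed.

Lemma adjK m n (M : 'M[C]_(m, n)) : adj (adj M) = M.
Proof. by apply/matrixP => i j; rewrite !adjE conjCK. Qed.

Lemma adjD m n (M N : 'M[C]_(m, n)) : adj (M + N) = adj M + adj N.
Proof. by apply/matrixP => i j; rewrite !adjE !mxE rmorphD. Qed.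

Lemma adjN m n (M : 'M[C]_(m, n)) : adj (- M) = - adj M.
Proof. by apply/matrixP => i j; rewrite !adjE !mxE rmorphN. Qed.

Lemma adjB m n (M N : 'M[C]_(m, n)) : adj (M - N) = adj M - adj N.
Proof. by rewrite adjD adjN. Qed.

Lemma adjZ m n (c : C) (M : 'M[C]_(m, n)) : adj (c *: M) = Num.conj c *: adj M.
Proof. by apply/matrixP => i j; rewrite !adjE !mxE rmorphM. Qed.

Lemma adjM m n p (M : 'M[C]_(m, n)) (N : 'M[C]_(n, p)) : adj (M *m N) = adj N *m adj M.
Proof.
apply/matrixP => i j; rewrite adjE !mxE rmorph_sum; apply: eq_bigr => k _.
by rewrite rmorphM !adjE mulrC.
Qed.

Lemma adj_sum m n (I : finType) (F : I -> 'M[C]_(m, n)) :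
  adj (\sum_i F i) = \sum_i adj (F i).
Proof.
apply/matrixP => i j; rewrite adjE !summxE rmorph_sum; apply: eq_bigr => k _.
by rewrite adjE.
Qed.

Lemma adj_scalar n (c : C) : adj (c%:M : 'M[C]_n) = (Num.conj c)%:M.
Proof.
apply/matrixP => i j; rewrite adjE !mxE eq_sym; exact: rmorphMn.
Qed.

Lemma adj1 n : adj (1%:M : 'M[C]_n) = 1%:M.
Proof. by rewrite adj_scalar conjC1. Qed.

Lemma adj0 m n : adj (0 : 'M[C]_(m, n)) = 0.
Proof. by apply/matrixP => i j; rewrite adjE !mxE conjC0. Qed.

Lemma adj_self_ge0 d (x : 'cV[C]_d) : 0 <= (adj x *m x) 0 0.
Proof.
rewrite mxE; apply: sumr_ge0 => i _; rewrite adjE mulrC; exact: mul_conjC_ge0.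
Qed.

Lemma proj_psd d (P : 'M[C]_d) : P = adj P -> P *m P = P -> psd P.
Proof.
move=> hP iP; split => // v.
have -> : adj v *m P *m v = adj (P *m v) *m (P *m v).
  by rewrite adjM -hP -{1}iP !mulmxA.
exact: adj_self_ge0.
Qed.

Lemma real_conj (x : R) : Num.conj (x%:C : C) = x%:C.
Proof. exact: conjc_real. Qed.

Lemma realCM (x y : R) : ((x * y)%:C : C) = x%:C * y%:C.
Proof. exact: rmorphM. Qed.
Lemma realCD (x y : R) : ((x + y)%:C : C) = x%:C + y%:C.
Proof. exact: rmorphD. Qed.
Lemma realCB (x y : R) : ((x - y)%:C : C) = x%:C - y%:C.
Proof. exact: rmorphB. Qed.
Lemma realCN (x : R) : ((- x)%:C : C) = - x%:C.
Proof. exact: rmorphN. Qed.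
Lemma realC1 : ((1 : R)%:C : C) = 1.
Proof. exact: rmorph1. Qed.
Lemma realC0 : ((0 : R)%:C : C) = 0.
Proof. exact: rmorph0. Qed.
Lemma realCV (x : R) : ((x^-1)%:C : C) = (x%:C)^-1.
Proof. exact: fmorphV. Qed.
Lemma realCn (n : nat) : ((n%:R : R)%:C : C) = n%:R.
Proof. exact: rmorph_nat. Qed.
Lemma realCX (x : R) n : ((x ^+ n)%:C : C) = x%:C ^+ n.
Proof. exact: rmorphXn. Qed.
Lemma conjM (x z : C) : Num.conj (x * z) = Num.conj x * Num.conj z.
Proof. exact: rmorphM. Qed.
Lemma conj_realM (x : R) (z : C) : Num.conj (x%:C * z) = x%:C * Num.conj z.
Proof. by rewrite rmorphM; congr (_ * _); exact: real_conj. Qed.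

End Basics.
Section Proj.
Variable R : realType.
Local Notation C := R[i].
Variables (d n : nat) (f : 'I_n -> 'cV[C]_d).
Hypothesis fON : forall j k, adj (f j) *m f k = (j == k)%:R%:M.

Definition pfam : 'I_n.+1 -> 'M[C]_d := fun k =>
  if unlift ord_max k is Some j then f j *m adj (f j)
  else 1%:M - \sum_j f j *m adj (f j).

Lemma pfam_mul1 j k : f j *m adj (f j) *m (f k *m adj (f k)) =
  if j == k then f j *m adj (f j) else 0.
Proof.
rewrite mulmxA -(mulmxA (f j)) fON mul_mx_scalar.
case: eqP => [->|_]; first by rewrite scale1r.
by rewrite scale0r mul0mx.
Qed.

Lemma pfam_SS : (\sum_j f j *m adj (f j)) *m (\sum_j f j *m adj (f j)) =
  \sum_j f j *m adj (f j).
Proof.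
rewrite mulmx_suml; apply: eq_bigr => j _; rewrite mulmx_sumr.
rewrite (bigD1 j) //= pfam_mul1 eqxx big1 ?addr0 // => k /negbTE kj.
by rewrite pfam_mul1 eq_sym kj.
Qed.

Lemma pfam_S1 k : (\sum_j f j *m adj (f j)) *m (f k *m adj (f k)) = f k *m adj (f k).
Proof.
rewrite mulmx_suml (bigD1 k) //= pfam_mul1 eqxx big1 ?addr0 // => j /negbTE kj.
by rewrite pfam_mul1 kj.
Qed.

Lemma pfam_1S k : (f k *m adj (f k)) *m (\sum_j f j *m adj (f j)) = f k *m adj (f k).
Proof.
rewrite mulmx_sumr (bigD1 k) //= pfam_mul1 eqxx big1 ?addr0 // => j /negbTE kj.
by rewrite pfam_mul1 eq_sym kj.
Qed.

Lemma rk1_herm (v : 'cV[C]_d) : adj (v *m adj v) = v *m adj v.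
Proof. by rewrite adjM adjK. Qed.

Lemma pfam_herm k : pfam k = adj (pfam k).
Proof.
rewrite /pfam; case: (unlift _ _) => [j|]; first by rewrite rk1_herm.
rewrite adjB adj1 adj_sum; congr (_ - _); apply: eq_bigr => j _.
by rewrite rk1_herm.
Qed.

Lemma pfam_mul j k : pfam j *m pfam k = (if j == k then pfam j else 0).
Proof.
rewrite /pfam; case: (unliftP ord_max j) => [j'|] ->;
  case: (unliftP ord_max k) => [k'|] ->.
- by rewrite pfam_mul1 (inj_eq lift_inj).
- rewrite eq_sym (negbTE (neq_lift _ _)).
  by rewrite mulmxBr mulmx1 pfam_1S subrr.
- rewrite (negbTE (neq_lift _ _)).
  by rewrite mulmxBl mul1mx pfam_S1 subrr.
- rewrite eqxx mulmxBl mul1mx mulmxBr mulmx1 pfam_SS.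
  by rewrite subrr subr0.
Qed.

Lemma widen_lift m (j : 'I_m) : widen_ord (leqnSn m) j = lift ord_max j.
Proof. by apply/val_inj; rewrite /= /bump leqNgt ltn_ord. Qed.

Lemma pfam_sum : \sum_k pfam k = 1%:M.
Proof.
rewrite big_ord_recr /= /pfam unlift_none.
rewrite (eq_bigr (fun j => f j *m adj (f j))); first by rewrite addrC subrK.
by move=> j _; rewrite widen_lift liftK.
Qed.

Lemma pfam_proj : is_projective pfam.
Proof.
split; last exact: pfam_mul.
split; last exact: pfam_sum.
move=> k; apply: proj_psd; first exact: pfam_herm.
by rewrite pfam_mul eqxx.
Qed.

End Proj.
Section Post.
Variable R : realType.
Local Notation C := R[i].

Lemma postproc_sum d m n (q : 'I_m -> 'I_n -> R) (P : 'I_n -> 'M[C]_d) :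
  is_postproc q -> \sum_k P k = 1%:M -> \sum_i postproc q P i = 1%:M.
Proof.
move=> [_ hq] hP; rewrite /postproc exchange_big /= -hP.
apply: eq_bigr => j _; rewrite -scaler_suml -rmorph_sum hq.
by rewrite scale1r.
Qed.

Definition qid n : 'I_n -> 'I_n -> R := fun i j => (i == j)%:R.

Lemma qid_post n : is_postproc (qid n).
Proof.
split=> [i j|j]; first by rewrite /qid ler0n.
rewrite /qid (bigD1 j) //= eqxx big1 ?addr0 // => i /negbTE ->; by [].
Qed.

Lemma postproc_id d n (P : 'I_n -> 'M[C]_d) i : postproc (qid n) P i = P i.
Proof.
rewrite /postproc (bigD1 i) //= /qid eqxx scale1r big1 ?addr0 // => j.
by rewrite eq_sym => /negbTE ->; rewrite scale0r.
Qed.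

Lemma SP_fin d m (T : finType) (N : 'I_m -> 'M[C]_d) (w : T -> R) (n : T -> nat)
  (P : forall s, 'I_(n s) -> 'M[C]_d) (q : forall s, 'I_m -> 'I_(n s) -> R) :
  (forall s, 0 <= w s) -> \sum_s w s = 1 -> (forall s, is_projective (P s)) ->
  (forall s, is_postproc (q s)) ->
  (forall i, N i = \sum_s (w s)%:C *: postproc (q s) (P s) i) -> SP N.
Proof.
move=> w0 w1 hP hq hN.
exists #|T|, (fun r => w (enum_val r)), (fun r => n (enum_val r)),
  (fun r => P (enum_val r)), (fun r => q (enum_val r)).
split=> //.
- by rewrite -w1 (big_enum_val (fun s => w s)).
- move=> i; rewrite hN.
  exact: (big_enum_val (fun s => (w s)%:C *: postproc (q s) (P s) i)).
Qed.

End Post.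
Section Ortho.
Variable R : realType.
Local Notation C := R[i].
Import spectral sesquilinear.

Lemma ortho_basis d l (psi : 'I_l -> 'cV[C]_d) :
  exists (D : nat) (b : 'I_D -> 'cV[C]_d), D = (d - \rank (Wmat psi))%N /\
  (forall m m', adj (b m) *m b m' = (m == m')%:R%:M) /\
  (forall m j, adj (b m) *m psi j = 0).
Proof.
pose V := map_mx Num.conj (Wmat psi).
pose X := orthomx Num.conj (hermitian1mx d) V.
pose U := schmidt (row_base X).
have Uu : U \is unitarymx by apply: schmidt_unitarymx; exact: rank_leq_col.
have UX : (U <= X)%MS.
  by rewrite (eqmx_schmidt_free (row_base_free X)) eq_row_base.
exists (\rank X), (fun m => adj (row m U)); split; [|split].
- by rewrite rank_ortho mxrank_map.
- move=> m m'; rewrite adjK; apply/matrixP => i j; rewrite !ord1.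
  move/unitarymxP: Uu => /matrixP /(_ m m'); rewrite !mxE => <-.
  by apply: eq_bigr => a _; rewrite !mxE.
- move=> m j.
  have : (row m U <= X)%MS by apply: submx_trans UX; exact: row_sub.
  move/orthomx1P => /matrixP /(_ 0 j); rewrite !mxE => h.
  apply/matrixP => i k; rewrite !ord1 [RHS]mxE -h mxE; apply: eq_bigr => a _.
  by rewrite adjK !mxE conjCK.
Qed.
End Ortho.
Section Gram.
Variable R : realType.
Local Notation C := R[i].
Import spectral sesquilinear.

Lemma sqrt_sq (x : R) : 0 <= x -> Num.sqrt x * Num.sqrt x = x.
Proof. by move=> hx; rewrite -expr2 sqr_sqrtr. Qed.

Lemma adj_tC m n (M : 'M[C]_(m, n)) : adj M = (M ^t Num.conj)%sesqui.
Proof. by apply/matrixP => i j; rewrite adjE !mxE. Qed.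

Lemma mx11E (M N : 'M[C]_1) : M 0 0 = N 0 0 -> M = N.
Proof. by move=> h; apply/matrixP => i j; rewrite !ord1. Qed.

Variables (d l : nat) (psi : 'I_l -> 'cV[C]_d) (A : 'I_l -> R).
Hypothesis A0 : forall k, 0 <= A k.
Hypothesis Npsd : psd (1%:M - \sum_j (A j)%:C *: (psi j *m adj (psi j))).

Let sA j := Num.sqrt (A j).
Let B : 'M[C]_(d, l) := \matrix_(a, j) ((sA j)%:C * psi j a 0).
Let M : 'M[C]_l := \matrix_(j, m)
  ((j == m)%:R - (sA j * sA m)%:C * (adj (psi j) *m psi m) 0 0).

Lemma M_BB : M = 1%:M - adj B *m B.
Proof.
apply/matrixP => j m; rewrite !mxE; congr (_ - _).
rewrite mulr_sumr; apply: eq_bigr => a _.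
rewrite !adjE !mxE conj_realM !realCM; ring.
Qed.

Lemma BB_N : B *m adj B = \sum_j (A j)%:C *: (psi j *m adj (psi j)).
Proof.
apply/matrixP => a b; rewrite !mxE summxE; apply: eq_bigr => j _.
rewrite /B adjE [X in X * _]mxE [X in _ * Num.conj X]mxE conj_realM.
rewrite [RHS]mxE [(psi j *m _) a b]mxE big_ord1 adjE.
have -> : (A j)%:C = (sA j)%:C * (sA j)%:C :> C by rewrite -realCM sqrt_sq.
ring.
Qed.

Lemma M_herm : M \is hermsymmx.
Proof.
apply/eqP; rewrite expr0 scale1r -adj_tC M_BB adjB adj1 adjM adjK.
done.
Qed.

Lemma gram_factor : exists y : 'I_l -> 'I_l -> C, forall j m,
  \sum_k Num.conj (y k j) * y k m =
  (j == m)%:R - (sA j * sA m)%:C * (adj (psi j) *m psi m) 0 0.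
Proof.
pose P := spectralmx M; pose sp := spectral_diag M.
have Pu : P \is unitarymx := spectral_unitarymx M.
have hM : M = adj P *m diag_mx sp *m P.
  rewrite adj_tC -invmx_unitary //; apply/orthomx_spectralP.
  exact: hermitian_normalmx M_herm.
have PQ : P *m adj P = 1%:M by rewrite adj_tC; apply/unitarymxP.
have spR : forall k, exists x : R, sp 0 k = x%:C.
  move=> k; apply/complex_realP.
  by move/mxOverP: (hermitian_spectral_diag_real M_herm) => /(_ 0 k).
pose lam k : R := complex.Re (sp 0 k).
have splam : forall k, sp 0 k = (lam k)%:C.
  by move=> k; case: (spR k) => x hx; rewrite /lam hx.
have lam0 : forall k, 0 <= lam k.
  move=> k; pose v := col k (adj P).
  have Mv : M *m v = sp 0 k *: v.
    apply/matrixP => a b; rewrite ord1 !mxE.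
    have : (M *m adj P) a k = (adj P *m diag_mx sp) a k.
      by rewrite hM -!mulmxA PQ mulmx1.
    rewrite mul_mx_diag mxE => h; rewrite mulrC -(@adjE _ _ _ P) -h mxE.
    by apply: eq_bigr => c _; congr (_ * _); rewrite /v mxE.
  have vv : adj v *m v = 1%:M.
    apply: mx11E; rewrite mxE.
    have := congr1 (fun X : 'M[C]_l => X k k) PQ; rewrite !mxE eqxx /= => <-.
    by apply: eq_bigr => c _; rewrite adjE /v !mxE conjCK.
  have BBv : adj B *m B *m v = (1 - sp 0 k) *: v.
    have -> : adj B *m B = 1%:M - M by rewrite M_BB opprB addrC subrK.
    by rewrite mulmxBl mul1mx Mv scalerBl scale1r.
  pose x := B *m v.
  have := (proj2 Npsd) x.
  have BBv' : adj B *m (B *m v) = (1 - sp 0 k) *: v by rewrite mulmxA BBv.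
  have e1 : adj x *m x = (1 - sp 0 k)%:M.
    rewrite /x adjM -mulmxA BBv' -scalemxAr vv.
    by rewrite scale_scalar_mx mulr1.
  have e2 : adj x *m (B *m adj B) *m x = ((1 - sp 0 k) ^+ 2)%:M.
    rewrite /x adjM -!mulmxA BBv' -!scalemxAr BBv' -scalemxAr vv.
    by rewrite !scale_scalar_mx mulr1 expr2.
  have -> : adj x *m (1%:M - \sum_j (A j)%:C *: (psi j *m adj (psi j))) *m x =
     ((1 - sp 0 k) - (1 - sp 0 k) ^+ 2)%:M.
    rewrite -BB_N mulmxBr mulmx1 mulmxBl e1 e2.
    by apply/matrixP => i j; rewrite !mxE -mulrnBl.
  rewrite mxE eqxx mulr1n splam -realC1 -realCB -realCX -realCB ler0c.
  by move=> h; nra.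
exists (fun k j => (Num.sqrt (lam k))%:C * P k j) => j m.
have := congr1 (fun X : 'M[C]_l => X j m) hM; rewrite /= [in X in X = _ -> _]/M mxE => ->.
rewrite mxE; apply: eq_bigr => k _.
rewrite mul_mx_diag mxE adjE conj_realM splam.
have -> : (lam k)%:C = (Num.sqrt (lam k))%:C * (Num.sqrt (lam k))%:C :> C.
  by rewrite -realCM sqrt_sq.
ring.
Qed.

End Gram.
Section Signs.
Variable R : realType.
Local Notation C := R[i].

Definition sg (b : bool) : C := if b then 1 else -1.

Lemma sg2 b : sg b * sg b = 1.
Proof. by case: b; rewrite /sg ?mulr1 ?mulrNN ?mulr1. Qed.

Definition flip l (k : 'I_l) (e : {ffun 'I_l -> bool}) : {ffun 'I_l -> bool} :=
  [ffun x => if x == k then ~~ e x else e x].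
Arguments flip {l}.

Lemma flipK l (k : 'I_l) : involutive (flip k).
Proof.
move=> e; apply/ffunP => x; rewrite !ffunE.
by case: (x == k); rewrite ?negbK.
Qed.

Lemma anti_sum0 l (k : 'I_l) (F : {ffun 'I_l -> bool} -> C) :
  (forall e, F (flip k e) = - F e) -> \sum_e F e = 0.
Proof.
move=> hF.
have h : \sum_e F e = - \sum_e F e.
  rewrite {1}(reindex_inj (inv_inj (flipK _ k))) /= -sumrN.
  by apply: eq_bigr => e _; rewrite hF.
have : (\sum_e F e) *+ 2 = 0 by rewrite mulr2n {1}h addNr.
by move/eqP; rewrite mulrn_eq0 /= => /eqP.
Qed.

Lemma sg_sum1 l (k : 'I_l) : \sum_(e : {ffun 'I_l -> bool}) sg (e k) = 0.
Proof.
apply: (anti_sum0 _ k) => e; rewrite ffunE eqxx.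
by case: (e k); rewrite /sg ?opprK.
Qed.

Lemma sg_sum2 l (k k' : 'I_l) :
  \sum_(e : {ffun 'I_l -> bool}) sg (e k) * sg (e k') =
  if k == k' then (2 ^ l)%:R else 0.
Proof.
case: eqP => [<-|nk].
  rewrite (eq_bigr (fun _ => 1)) => [|e _]; last exact: sg2.
  by rewrite sumr_const card_ffun card_bool card_ord.
apply: (anti_sum0 _ k) => e; rewrite !ffunE eqxx.
have /negbTE -> : k' != k by apply/eqP => h; apply: nk.
by case: (e k); rewrite /sg ?mulNr ?opprK.
Qed.

End Signs.
Section Opt.
Variable R : realType.
Local Notation C := R[i].
Lemma big_option (V : nmodType) (T : finType) (F : option T -> V) :
  \sum_s F s = F None + \sum_x F (Some x).
Proof.
rewrite (bigD1 None) //=; congr (_ + _).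
rewrite (reindex_omap Some id) => [|[x|] //].
by apply: eq_bigl => x; rewrite eqxx.
Qed.
End Opt.
Section Final.
Variable R : realType.
Local Notation C := R[i].

Lemma sum_lift (V : nmodType) n (F : 'I_n.+1 -> V) :
  \sum_i F i = \sum_j F (lift ord_max j) + F ord_max.
Proof.
rewrite big_ord_recr /=; congr (_ + _); apply: eq_bigr => j _.
by rewrite widen_lift.
Qed.

Lemma last_from_sum d n (X Y : 'I_n.+1 -> 'M[C]_d) :
  \sum_i X i = \sum_i Y i -> (forall j, X (lift ord_max j) = Y (lift ord_max j)) ->
  X ord_max = Y ord_max.
Proof.
rewrite !sum_lift => h hj.
have e : \sum_j X (lift ord_max j) = \sum_j Y (lift ord_max j).
  by apply: eq_bigr => j _; exact: hj.
by move: h; rewrite e => /addrI.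
Qed.

Lemma Phi_sum d (I : finType) (t : R) (F : I -> 'M[C]_d) :
  \sum_i Phi t (F i) = Phi t (\sum_i F i).
Proof.
rewrite /Phi big_split /= -scaler_sumr; congr (_ + _).
rewrite -scaler_suml; congr (_ *: _).
by rewrite raddf_sum /= -mulr_suml -mulr_sumr.
Qed.

Lemma Phi1 d (t : R) : (0 < d)%N -> Phi t (1%:M : 'M[C]_d) = 1%:M.
Proof.
move=> hd; rewrite /Phi mxtrace1 mulfK ?pnatr_eq0 -?lt0n //.
by rewrite -scalerDl realCB realC1 addrC subrK scale1r.
Qed.

End Final.
Section Main.
Variable R : realType.
Local Notation C := R[i].
Variables (d l D : nat) (psi : 'I_l -> 'cV[C]_d) (A : 'I_l -> R)
  (b : 'I_D -> 'cV[C]_d) (y : 'I_l -> 'I_l -> C).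
Hypothesis hlD : (l <= D)%N.
Hypothesis hl : (0 < l)%N.
Hypothesis hpsi : forall k, adj (psi k) *m psi k = 1%:M.
Hypothesis hA : forall k, 0 <= A k <= 1.
Hypothesis hbON : forall m m', adj (b m) *m b m' = (m == m')%:R%:M.
Hypothesis hbperp : forall m j, adj (b m) *m psi j = 0.
Hypothesis hy : forall j m, \sum_k Num.conj (y k j) * y k m =
  (j == m)%:R - (Num.sqrt (A j) * Num.sqrt (A m))%:C * (adj (psi j) *m psi m) 0 0.

Lemma D_gt0 : (0 < D)%N. Proof. exact: leq_trans hl hlD. Qed.

Definition sig (s : 'I_D) (k : 'I_l) : 'I_D := Ordinal (ltn_pmod (k + s) D_gt0).

Lemma sig_injk s : injective (sig s).
Proof.
move=> k k' /(congr1 val) /= /eqP; rewrite eqn_modDr.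
rewrite !modn_small ?(leq_trans (ltn_ord _) hlD) // => /eqP h.
exact: val_inj.
Qed.

Lemma sig_injs k : injective (sig^~ k).
Proof.
move=> s s' /(congr1 val) /= /eqP; rewrite eqn_modDl.
by rewrite !modn_small // => /eqP h; apply: val_inj.
Qed.

Definition aj j : C := (Num.sqrt (A j))%:C.
Definition xi (e : {ffun 'I_l -> bool}) s j : 'cV[C]_d :=
  \sum_k (y k j * sg R (e k)) *: b (sig s k).
Definition phi e s j : 'cV[C]_d := aj j *: psi j + xi e s j.

Lemma adj_comb (I : finType) (c : I -> C) (u : I -> 'cV[C]_d) :
  adj (\sum_i c i *: u i) = \sum_i Num.conj (c i) *: adj (u i).
Proof. by rewrite adj_sum; apply: eq_bigr => i _; rewrite adjZ. Qed.

Lemma psi_perp_b m j : adj (psi j) *m b m = 0.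
Proof. by rewrite -[b m]adjK -adjM hbperp adj0. Qed.

Lemma psi_xi e s j j' : adj (psi j') *m xi e s j = 0.
Proof.
rewrite /xi mulmx_sumr big1 // => k _.
by rewrite -scalemxAr psi_perp_b scaler0.
Qed.

Lemma xi_psi e s j j' : adj (xi e s j) *m psi j' = 0.
Proof. by rewrite -[psi j']adjK -adjM psi_xi adj0. Qed.

Lemma sg_conj b0 : Num.conj (sg R b0) = sg R b0.
Proof. by case: b0; rewrite /sg ?rmorphN rmorph1. Qed.

Lemma xi_xi e s j m :
  adj (xi e s j) *m xi e s m = (\sum_k Num.conj (y k j) * y k m)%:M.
Proof.
rewrite /xi adj_comb mulmx_suml raddf_sum /=; apply: eq_bigr => k _.
rewrite -scalemxAl mulmx_sumr (bigD1 k) //= big1 => [|k' nk].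
  rewrite addr0 -scalemxAr hbON eqxx scale_scalar_mx mulr1.
  by rewrite conjM sg_conj scale_scalar_mx mulrACA sg2 mulr1.
rewrite -scalemxAr hbON (inj_eq (@sig_injk s)) eq_sym (negbTE nk).
by rewrite scale_scalar_mx mulr0; apply/matrixP => i i'; rewrite !mxE mul0rn.
Qed.

Lemma phi_ON e s j m : adj (phi e s j) *m phi e s m = (j == m)%:R%:M.
Proof.
rewrite /phi adjD adjZ mulmxDl !mulmxDr -!scalemxAl -!scalemxAr.
rewrite psi_xi xi_psi !scaler0 addr0 add0r xi_xi hy.
apply: mx11E; rewrite !mxE /= !mulr1n /aj real_conj realCM.
ring.
Qed.


Lemma sum_xi s j : \sum_e xi e s j = 0.
Proof.
rewrite /xi exchange_big big1 // => k _.
by rewrite -scaler_suml -mulr_sumr sg_sum1 mulr0 scale0r.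
Qed.

Lemma outer_comb (I : finType) (c c' : I -> C) (u v : I -> 'cV[C]_d) :
  (\sum_i c i *: u i) *m adj (\sum_i c' i *: v i) =
  \sum_i \sum_i' (c i * Num.conj (c' i')) *: (u i *m adj (v i')).
Proof.
rewrite adj_comb mulmx_suml; apply: eq_bigr => i _.
rewrite mulmx_sumr; apply: eq_bigr => i' _.
by rewrite -scalemxAl -scalemxAr scalerA.
Qed.

Definition PWp : 'M[C]_d := \sum_m b m *m adj (b m).

Lemma sum_xixi s j : \sum_e xi e s j *m adj (xi e s j) =
  \sum_k (y k j * Num.conj (y k j) * (2 ^ l)%:R) *: (b (sig s k) *m adj (b (sig s k))).
Proof.
rewrite /xi; under eq_bigr do rewrite outer_comb.
rewrite exchange_big; apply: eq_bigr => k _.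
rewrite exchange_big (bigD1 k) //= [X in _ + X]big1 => [|k' nk].
  rewrite addr0 -scaler_suml; congr (_ *: _).
  under eq_bigr do rewrite conjM sg_conj mulrACA.
  by rewrite -mulr_sumr sg_sum2 eqxx.
rewrite -scaler_suml.
under eq_bigr do rewrite conjM sg_conj mulrACA.
by rewrite -mulr_sumr sg_sum2 eq_sym (negbTE nk) mulr0 scale0r.
Qed.

Lemma sum_shift k : \sum_s b (sig s k) *m adj (b (sig s k)) = PWp.
Proof. by rewrite /PWp [RHS](reindex_inj (sig_injs k)). Qed.

Lemma phi_outer e s j : phi e s j *m adj (phi e s j) =
  (A j)%:C *: (psi j *m adj (psi j)) + aj j *: (psi j *m adj (xi e s j)) +
  aj j *: (xi e s j *m adj (psi j)) + xi e s j *m adj (xi e s j).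
Proof.
have hAj : 0 <= A j by case/andP: (hA j).
rewrite /phi adjD adjZ mulmxDl !mulmxDr -!scalemxAl -!scalemxAr /aj real_conj.
rewrite scalerA -realCM sqrt_sq //.
by rewrite !addrA.
Qed.

Lemma avg j : \sum_e \sum_s phi e s j *m adj (phi e s j) =
  ((2 ^ l * D)%:R * (A j)%:C) *: (psi j *m adj (psi j)) +
  ((2 ^ l)%:R * (1 - (A j)%:C)) *: PWp.
Proof.
have hAj : 0 <= A j by case/andP: (hA j).
rewrite exchange_big /=.
have hs : forall s, \sum_e phi e s j *m adj (phi e s j) =
   ((2 ^ l)%:R * (A j)%:C) *: (psi j *m adj (psi j)) +
   \sum_k (y k j * Num.conj (y k j) * (2 ^ l)%:R) *: (b (sig s k) *m adj (b (sig s k))).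
  move=> s; under eq_bigr do rewrite phi_outer.
  rewrite !big_split /= sum_xixi; congr (_ + _).
  have h1 : \sum_e psi j *m adj (xi e s j) = 0.
    by rewrite -mulmx_sumr -adj_sum sum_xi adj0 mulmx0.
  have h2 : \sum_e xi e s j *m adj (psi j) = 0.
    by rewrite -mulmx_suml sum_xi mul0mx.
  rewrite -!scaler_sumr h1 h2 !scaler0 !addr0 sumr_const card_ffun card_bool card_ord.
  by rewrite -scaler_nat scalerA mulrC.
under eq_bigr do rewrite hs.
rewrite big_split /= sumr_const card_ord -scaler_nat scalerA; congr (_ + _).
  by congr (_ *: _); rewrite natrM; ring.
rewrite exchange_big /=.
under eq_bigr do rewrite -scaler_sumr sum_shift.
rewrite -scaler_suml; congr (_ *: _).
rewrite mulrC -mulr_suml; congr (_ * _).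
have := hy j j; rewrite eqxx hpsi mxE eqxx mulr1n mulr1 => h.
rewrite (eq_bigr (fun k => Num.conj (y k j) * y k j)) ?h => [|k _]; last exact: mulrC.
by rewrite sqrt_sq.
Qed.

Variable t : R.
Hypothesis ht0 : 0 <= t.
Hypothesis ht1 : t <= 1.
Hypothesis hd : (0 < d)%N.
Hypothesis hsumA : \sum_j A j <= d%:R.
Hypothesis hgam : forall j, 0 <= (1 - t) * A j / d%:R - t * (1 - A j) / D%:R.
Hypothesis hN : is_povm (Nmeas psi A).

Definition gam j := (1 - t) * A j / d%:R - t * (1 - A j) / D%:R.
Definition bet j := gam j / (1 - t).

Lemma d_neq0 : (d%:R : R) != 0. Proof. by rewrite pnatr_eq0 -lt0n. Qed.
Lemma D_neq0 : (D%:R : R) != 0. Proof. by rewrite pnatr_eq0 -lt0n D_gt0. Qed.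

Lemma bet0 j : 0 <= bet j.
Proof. by apply: divr_ge0; [exact: hgam | rewrite subr_ge0]. Qed.

Lemma bet_le j : bet j <= A j / d%:R.
Proof.
have hAj : A j <= 1 by case/andP: (hA j).
have hA0 : 0 <= A j by case/andP: (hA j).
have dpos : 0 < (d%:R : R) by rewrite ltr0n.
have Dpos : 0 < (D%:R : R) by rewrite ltr0n D_gt0.
rewrite /bet; have [->|nt] := eqVneq t 1.
  by rewrite subrr invr0 mulr0 divr_ge0 ?ler0n.
have t1 : 0 < 1 - t by rewrite subr_gt0 lt_neqAle nt ht1.
rewrite ler_pdivrMr // /gam.
have -> : (1 - t) * A j / d%:R = A j / d%:R * (1 - t) by ring.
rewrite gerBl; apply: divr_ge0; last exact: ltW.
by apply: mulr_ge0 => //; rewrite subr_ge0.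
Qed.

Lemma bet_eq j : (1 - t) * bet j = gam j.
Proof.
have hAj : A j <= 1 by case/andP: (hA j).
rewrite /bet; have [ht|nt] := eqVneq t 1.
  have := hgam j; rewrite ht subrr !mul0r add0r mul1r oppr_ge0 => h.
  have : 0 <= (1 - A j) / D%:R by apply: divr_ge0; rewrite ?subr_ge0 ?ler0n.
  move=> h2; have e : (1 - A j) / D%:R = 0 by apply/eqP; rewrite eq_le h h2.
  by rewrite /gam ht subrr !mul0r mul1r e subrr.
by rewrite mulrCA mulfV ?mulr1 // subr_eq0 eq_sym.
Qed.

Definition qN : 'I_l.+1 -> 'I_D.+1 -> R := fun i k =>
  match unlift ord_max i with
  | Some j => if unlift ord_max k is Some _ then bet j else A j / d%:R
  | None => if unlift ord_max k is Some _ then 1 - \sum_j bet j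
            else 1 - \sum_j A j / d%:R
  end.

Lemma sumAd : \sum_j A j / d%:R <= 1.
Proof.
rewrite -mulr_suml ler_pdivrMr ?mul1r //; by rewrite ltr0n.
Qed.

Lemma sumbet : \sum_j bet j <= 1.
Proof.
apply: le_trans sumAd; apply: ler_sum => j _; exact: bet_le.
Qed.

Lemma qN_post : is_postproc qN.
Proof.
split=> [i k|k].
  rewrite /qN; case: (unlift _ i) => [j|]; case: (unlift _ k) => [k'|].
  - exact: bet0.
  - by apply: divr_ge0; [case/andP: (hA j)| rewrite ler0n].
  - by rewrite subr_ge0 sumbet.
  - by rewrite subr_ge0 sumAd.
rewrite sum_lift /qN unlift_none.
under eq_bigr do rewrite liftK.
by case: (unlift _ k) => [k'|]; rewrite addrC subrK.
Qed.

Definition T := option ({ffun 'I_l -> bool} * 'I_D).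
Definition wT (s : T) : R := if s is Some _ then t / (2 ^ l * D)%:R else 1 - t.
Definition nT (s : T) : nat := if s is Some _ then l.+1 else D.+1.
Definition PT (s : T) : 'I_(nT s) -> 'M[C]_d :=
  match s as s0 return 'I_(nT s0) -> 'M[C]_d with
  | Some p => @pfam R d l (phi p.1 p.2)
  | None => @pfam R d D b
  end.
Definition qT (s : T) : 'I_l.+1 -> 'I_(nT s) -> R :=
  match s as s0 return 'I_l.+1 -> 'I_(nT s0) -> R with
  | Some _ => qid R l.+1
  | None => qN
  end.

Lemma n2D_neq0 : ((2 ^ l * D)%:R : R) != 0.
Proof. by rewrite pnatr_eq0 muln_eq0 expn_eq0 /= -lt0n D_gt0. Qed.

Lemma wT_sum : \sum_s wT s = 1.
Proof.
rewrite big_option /= sumr_const card_prod card_ffun card_bool !card_ord.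
by rewrite -[t / _ *+ _]mulr_natr divfK ?n2D_neq0 // subrK.
Qed.

Lemma PT_proj s : is_projective (PT s).
Proof.
case: s => [[e s]|] /=; apply: pfam_proj => //.
exact: phi_ON.
Qed.

Lemma qT_post s : is_postproc (qT s).
Proof. case: s => [p|] /=; [exact: qid_post | exact: qN_post]. Qed.

Lemma main_lift j : PhiM t (Nmeas psi A) (lift ord_max j) =
  \sum_s (wT s)%:C *: postproc (qT s) (PT s) (lift ord_max j).
Proof.
rewrite big_option /=.
have -> : \sum_x (wT (Some x))%:C *: postproc (qT (Some x)) (PT (Some x)) (lift ord_max j)
   = (t / (2 ^ l * D)%:R)%:C *: \sum_e \sum_s phi e s j *m adj (phi e s j).
  rewrite pair_big scaler_sumr; apply: eq_bigr => [[e s]] _ /=.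
  by rewrite postproc_id /pfam liftK.
rewrite avg.
have -> : postproc qN (@pfam R d D b) (lift ord_max j) =
    (bet j)%:C *: PWp + (A j / d%:R)%:C *: (1%:M - PWp).
  rewrite /postproc sum_lift /qN !liftK unlift_none /pfam unlift_none.
  congr (_ + _); rewrite /PWp scaler_sumr; apply: eq_bigr => m _.
  by rewrite !liftK.
rewrite /PhiM /Nmeas liftK /Phi scalerDr !scalerA -[(1 - t)%:C * (bet j)%:C]realCM bet_eq.
have trX : \tr ((A j)%:C *: (psi j *m adj (psi j))) = (A j)%:C.
  by rewrite mxtraceZ mxtrace_mulC hpsi mxtrace1 mulr1.
rewrite trX.
apply/matrixP => u v; rewrite !mxE.
rewrite /gam !(realCM, realCB, realCV, realC1, realCn) natrM.
have := d_neq0; have := D_neq0; have := n2D_neq0.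
rewrite !pnatr_eq0 => h1 h2 h3.
have h1' : (2 ^ l)%:R != 0 :> C by rewrite pnatr_eq0 expn_eq0.
have h2' : D%:R != 0 :> C by rewrite pnatr_eq0.
have h3' : d%:R != 0 :> C by rewrite pnatr_eq0.
field.
by rewrite h1' h2' h3'.
Qed.

Lemma main_eq i : PhiM t (Nmeas psi A) i =
  \sum_s (wT s)%:C *: postproc (qT s) (PT s) i.
Proof.
case: (unliftP ord_max i) => [j|] ->; first exact: main_lift.
apply: (@last_from_sum R d l (PhiM t (Nmeas psi A))
   (fun i => \sum_s (wT s)%:C *: postproc (qT s) (PT s) i)); last exact: main_lift.
rewrite /PhiM Phi_sum (proj2 hN) Phi1 //.
rewrite exchange_big /=.
rewrite (eq_bigr (fun s => (wT s)%:C *: 1%:M)) => [|s _]; last first.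
  by rewrite -scaler_sumr postproc_sum //; [exact: qT_post | exact: (proj2 (proj1 (PT_proj s)))].
by rewrite -scaler_suml -rmorph_sum wT_sum rmorph1 scale1r.
Qed.

Lemma main_SP : SP (PhiM t (Nmeas psi A)).
Proof.
apply: (@SP_fin R d l.+1 T _ wT nT PT qT).
- case=> [x|] /=; last by rewrite subr_ge0.
  by apply: divr_ge0 => //; rewrite ler0n.
- exact: wT_sum.
- exact: PT_proj.
- exact: qT_post.
- exact: main_eq.
Qed.

End Main.
Section Top.
Variable R : realType.
Local Notation C := R[i].

Lemma psd_diag d (N : 'M[C]_d) a : psd N -> 0 <= N a a.
Proof.
case=> _ h; have := h (delta_mx a 0).
have -> : adj (delta_mx a 0 : 'cV[C]_d) = delta_mx 0 a.
  apply/matrixP => i j; rewrite adjE !mxE andbC.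
  by case: (_ && _); rewrite ?rmorph1 ?rmorph0.
by rewrite -rowE -colE !mxE.
Qed.

Lemma psd_tr d (N : 'M[C]_d) : psd N -> 0 <= \tr N.
Proof. by move=> h; rewrite /mxtrace; apply: sumr_ge0 => a _; exact: psd_diag. Qed.

Lemma big_unit1 (V : nmodType) (F : unit -> V) : \sum_i F i = F tt.
Proof. by rewrite (big_pred1 tt) // => -[]. Qed.

Lemma tr_opp d (M : 'M[C]_d) : \tr (- M) = - \tr M.
Proof. by rewrite /mxtrace -sumrN; apply: eq_bigr => i _; rewrite mxE. Qed.

Lemma tr_sum d (I : finType) (F : I -> 'M[C]_d) : \tr (\sum_i F i) = \sum_i \tr (F i).
Proof.
rewrite /mxtrace exchange_big; apply: eq_bigr => a _; by rewrite summxE.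
Qed.

End Top.

Theorem lemma7 (R : realType) (d l : nat) (psi : 'I_l -> 'cV[R[i]]_d) (A : 'I_l -> R) :
  (2 * l <= d)%N ->
  (forall k, adj (psi k) *m psi k = 1) ->
  (forall k, 0 <= A k <= 1) ->
  is_povm (Nmeas psi A) ->
  forall t : R, 0 <= t ->
    (forall k, t <= (d - \rank (Wmat psi))%:R * A k /
                    ((\rank (Wmat psi))%:R * (1 - A k) + (d - \rank (Wmat psi))%:R)) ->
    SP (PhiM t (Nmeas psi A)).
Proof.
move=> h2l hpsi hA hN t ht0 hbound.
have Npsd : psd (1%:M - \sum_j (A j)%:C *: (psi j *m adj (psi j))).
  by have := (proj1 hN) ord_max; rewrite /Nmeas unlift_none.
have [l0|hl] := posnP l.
  subst l.
  pose f : 'I_0 -> 'cV[R[i]]_d := fun j => match j with Ordinal _ h => False_rect _ (notF h) end.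
  apply: (@SP_fin R d 1 unit _ (fun _ => 1) (fun _ => 1%N) (fun _ => @pfam R d 0 f)
     (fun _ => qid R 1)) => //.
  - by rewrite big_unit1.
  - by move=> _; apply: pfam_proj => -[].
  - by move=> _; exact: qid_post.
  move=> i; rewrite big_unit1 rmorph1 scale1r postproc_id.
  rewrite /PhiM /Nmeas /pfam !ord1 unlift_none !big_ord0 subr0.
  have [d0|dpos] := posnP d; last exact: Phi1.
  by apply/matrixP => -[m hm]; move: hm; rewrite d0.
have [D [b [hD [hbON hbperp]]]] := @ortho_basis R d l psi.
have A0 : forall k, 0 <= A k by move=> k; case/andP: (hA k).
have [y hy] := @gram_factor R d l psi A A0 Npsd.
have hr : (\rank (Wmat psi) <= l)%N by exact: rank_leq_row.
have hlD : (l <= D)%N by rewrite hD; lia.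
have hd : (0 < d)%N by lia.
have hdD : d%:R = (\rank (Wmat psi))%:R + D%:R :> R by rewrite hD -natrD; congr (_%:R); lia.
have hsumA : \sum_j A j <= d%:R.
  have := @psd_tr R d _ Npsd.
  have -> : \tr (1%:M - \sum_j (A j)%:C *: (psi j *m adj (psi j))) =
            d%:R - \sum_j (A j)%:C.
    rewrite mxtraceD mxtrace1 tr_opp tr_sum; congr (_ - _).
    by apply: eq_bigr => j _; rewrite mxtraceZ mxtrace_mulC hpsi mxtrace1 mulr1.
  by rewrite subr_ge0 -rmorph_sum -realCn lecR.
have Dpos : 0 < (D%:R : R) by rewrite ltr0n; lia.
have dpos : 0 < (d%:R : R) by rewrite ltr0n.
set r := \rank (Wmat psi) in hbound hdD.
have key : forall j, t * (r%:R * (1 - A j) + D%:R) <= D%:R * A j.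
  move=> j; have := hbound j; rewrite -hD.
  have den : 0 < r%:R * (1 - A j) + D%:R.
    apply: ltr_wpDl => //; apply: mulr_ge0; rewrite ?ler0n // subr_ge0.
    by case/andP: (hA j).
  by rewrite ler_pdivlMr // mulrC.
have ht1 : t <= 1.
  have := key (Ordinal hl).
  have hA1 := hA (Ordinal hl); case/andP: hA1 => a0 a1.
  have : 0 <= r%:R * (1 - A (Ordinal hl)) by apply: mulr_ge0; rewrite ?ler0n ?subr_ge0.
  move=> h1 h2; nra.
apply: (@main_SP R d l D psi A b y hlD hl hpsi hA hbON hbperp hy t ht0 ht1 hd hsumA _ hN).
move=> j.
have -> : (1 - t) * A j / d%:R - t * (1 - A j) / D%:R =
          (D%:R * A j - t * (r%:R * (1 - A j) + D%:R)) / (d%:R * D%:R).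
  rewrite hdD; field.
  by rewrite -hdD; apply/andP; split; apply: lt0r_neq0.
apply: divr_ge0; first by rewrite subr_ge0 key.
by apply: mulr_ge0; apply: ltW.
Qed.
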